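(* Let $S$ be a finite set. The comma category $(k\downarrow *_S)$ is equivalent to the category $\mathrm I_S$ whose objects are connected graphs with set of outer flags equal to $S$, and whose morphisms $\Gamma\to\Gamma'$ are graph morphisms which are composites of isomorphisms and contractions of non-loop edges (i.e. spanning-forest contractions) and whose flag map restricts to the identity on $S$.
   Context: A graph $\Gamma=(F,V,\partial,\imath)$ consists of finite sets $F$ (flags) and $V$ (vertices), a map $\partial:F\to V$ and an involution $\imath$ of $F$; 2-element orbits of $\imath$ are edges, fixed points are outer flags. A graph morphism $\phi:\Gamma\to\Gamma'$ is a triple $(\phi_V,\phi^F,\imath_\phi)$ with $\phi_V:V\to V'$ surjective, $\phi^F:F'\to F$ injective and $\imath_\phi$ a fixed-point-free involution of $F\setminus\phi^F(F')$, such that $\phi_V\partial\phi^F=\partial'$, $\phi_V\partial(f)=\phi_V\partial(\imath_\phi f)$ for $f\notin\phi^F(F')$, each $f\notin\phi^F(F')$ either lies on an edge $\{f,\imath f\}$ with $\imath_\phi f=\imath f$ or $f,\imath_\phi f$ are outer flags, and $\imath\phi^F(f')=\phi^F\imath'(f')$ whenever $\phi^F(f')$ lies on an edge. The simple contraction of an edge $\{s,t\}$ with $\partial s\neq\partial t$ is (quotient $V\to V/(\partial s\sim\partial t)$, inclusion $F\setminus\{s,t\}\hookrightarrow F$, $\imath_\phi(s)=t$). An aggregate is a graph with $\imath=\mathrm{id}$; $*_S$ is the one-vertex aggregate with flags $S$. For distinct outer flags $s,t$ of an aggregate, the virtual edge (if $\partial s\ne\partial t$) resp. loop (if $\partial s=\partial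 t$) contraction is the morphism (quotient $V\to V/(\partial s\sim\partial t)$, inclusion $F\setminus\{s,t\}\hookrightarrow F$, $\imath_\phi(s)=t$). $\mathrm{Agg}^{\rm ctd}$: aggregates with morphisms generated by isomorphisms and virtual edge and loop contractions; $\mathrm{Agg}^{\rm forest}$: generated by isomorphisms and virtual edge contractions; $k$ the inclusion. The comma category $(k\downarrow *_S)$ has objects pairs $(X,\phi)$ with $X$ an aggregate and $\phi:X\to *_S$ in $\mathrm{Agg}^{\rm ctd}$, and morphisms $\psi:X\to X'$ in $\mathrm{Agg}^{\rm forest}$ with $\phi'\psi=\phi$. *)

(* Defs.v *)
From mathcomp Require Import all_boot.

Set Implicit Arguments.
Unset Strict Implicit.
Unset Printing Implicit Defensive.

Record graph := Graph {
  flag : finType;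
  vert : finType;
  bd : flag -> vert;
  inv : flag -> flag;
  inv_invol : involutive inv }.

Definition outer (G : graph) (f : flag G) : Prop := inv f = f.

Record gmor (G H : graph) := GMor {
  mV : vert G -> vert H;
  mF : flag H -> flag G;
  mI : flag G -> flag G }.          (* \imath_\phi, only meaningful off the image of \phi^F *)

Definition in_img (G H : graph) (phi : gmor G H) (f : flag G) : Prop :=
  exists f', mF phi f' = f.

Definition is_gmor (G H : graph) (phi : gmor G H) : Prop :=
  [/\ (forall v', exists v, mV phi v = v'),
      injective (mF phi),
      (forall f, ~ in_img phi f ->
          (~ in_img phi (mI phi f) /\ mI phi (mI phi f) = f /\ mI phi f <> f)),
      (forall f', mV phi (bd (mF phi f')) = bd f') &
   [/\ (forall f, ~ in_img phi f -> mV phi (bd f) = mV phi (bd (mI phi f))),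
      (forall f, ~ in_img phi f ->
          (inv f <> f /\ mI phi f = inv f) \/ (outer f /\ outer (mI phi f)))
    & (forall f', inv (mF phi f') <> mF phi f' ->
          inv (mF phi f') = mF phi (inv f'))]].

Definition mor_eq (G H : graph) (phi psi : gmor G H) : Prop :=
  [/\ mV phi =1 mV psi, mF phi =1 mF psi &
      forall f, ~ in_img phi f -> mI phi f = mI psi f].

Definition gid (G : graph) : gmor G G := GMor id id id.

Definition gcomp (G H K : graph) (psi : gmor H K) (phi : gmor G H) : gmor G K :=
  GMor (mV psi \o mV phi) (mF phi \o mF psi)
    (fun f => match [pick g | mF phi g == f] with
              | Some g => mF phi (mI psi g)
              | None => mI phi f
              end).

Definition is_iso (G H : graph) (phi : gmor G H) : Prop :=
  [/\ is_gmor phi, bijective (mV phi) & bijective (mF phi)].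

(* A morphism phi : G -> H is "the contraction along {s,t}, followed by an
   isomorphism": phi_V identifies exactly \partial s and \partial t, phi^F is a
   bijection onto F \ {s,t}, and \imath_\phi s = t. *)
Definition contraction_along (G H : graph) (phi : gmor G H) (s t : flag G) : Prop :=
  [/\ is_gmor phi, s <> t,
      (forall v w, mV phi v = mV phi w <->
         [\/ v = w, (v = bd s /\ w = bd t) | (v = bd t /\ w = bd s)]),
      (forall f, in_img phi f <-> (f <> s /\ f <> t))
    & mI phi s = t].

Definition edge_contraction (G H : graph) (phi : gmor G H) : Prop :=
  exists s t, [/\ inv s = t, bd s <> bd t & contraction_along phi s t].

Definition aggregate (G : graph) : Prop := forall f : flag G, inv f = f.

Definition star (S : finType) : graph :=
  @Graph S unit (fun _ => tt) id (fun _ => erefl).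

Definition virtual_edge_contraction (G H : graph) (phi : gmor G H) : Prop :=
  [/\ aggregate G, aggregate H &
      exists s t, bd s <> bd t /\ contraction_along phi s t].

Definition loop_contraction (G H : graph) (phi : gmor G H) : Prop :=
  [/\ aggregate G, aggregate H &
      exists s t, bd s = bd t /\ contraction_along phi s t].

Inductive generated (Ob : graph -> Prop)
    (P : forall G H : graph, gmor G H -> Prop) : forall G H : graph, gmor G H -> Prop :=
| gen_iso G H (phi : gmor G H) : Ob G -> Ob H -> is_iso phi -> generated Ob P phi
| gen_base G H (phi : gmor G H) : P G H phi -> generated Ob P phi
| gen_comp G H K (phi : gmor G H) (psi : gmor H K) :
    generated Ob P phi -> generated Ob P psi -> generated Ob P (gcomp psi phi)
| gen_eq G H (phi psi : gmor G H) :
    mor_eq phi psi -> generated Ob P phi -> generated Ob P psi.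

Definition agg_ctd (G H : graph) (phi : gmor G H) : Prop :=
  generated aggregate
    (fun G H phi => virtual_edge_contraction phi \/ loop_contraction phi) phi.

Definition agg_forest (G H : graph) (phi : gmor G H) : Prop :=
  generated aggregate (fun G H phi => virtual_edge_contraction phi) phi.

Definition forest_contr (G H : graph) (phi : gmor G H) : Prop :=
  generated (fun _ => True) (fun G H phi => edge_contraction phi) phi.

Definition adj (G : graph) : rel (vert G) :=
  fun v w => [exists f : flag G, [&& inv f != f, bd f == v & bd (inv f) == w]].

Definition connected_graph (G : graph) : Prop :=
  (exists v : vert G, True) /\ forall v w : vert G, connect (@adj G) v w.

Record precat := PreCat {
  ob : Type;
  arr : ob -> ob -> Type;
  ishom : forall a b, arr a b -> Prop;         (* which raw arrows are morphisms *)
  heq : forall a b, arr a b -> arr a b -> Prop;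
  cid : forall a, arr a a;
  ccomp : forall a b c, arr b c -> arr a b -> arr a c }.

Arguments ishom {_ _ _} _.
Arguments heq {_ _ _} _ _.
Arguments cid {_} _.
Arguments ccomp {_ _ _ _} _ _.

Record functor (C D : precat) := Functor {
  fob : ob C -> ob D;
  farr : forall a b, arr a b -> arr (fob a) (fob b) }.

Arguments farr {_ _} _ {_ _} _.

Definition is_functor (C D : precat) (F : functor C D) : Prop :=
  [/\ (forall a b (f : arr a b), ishom f -> ishom (farr F f)),
      (forall a b (f g : arr a b), ishom f -> ishom g -> heq f g ->
          heq (farr F f) (farr F g)),
      (forall a, heq (farr F (cid a)) (cid (fob F a)))
    & (forall a b c (f : arr a b) (g : arr b c), ishom f -> ishom g ->
          heq (farr F (ccomp g f)) (ccomp (farr F g) (farr F f)))].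

Definition id_functor (C : precat) : functor C C :=
  @Functor C C id (fun a b f => f).

Definition comp_functor (C D E : precat) (G : functor D E) (F : functor C D)
  : functor C E :=
  @Functor C E (fob G \o fob F) (fun a b f => farr G (farr F f)).

Definition nat_iso (C D : precat) (F G : functor C D) : Prop :=
  exists (al : forall a, arr (fob F a) (fob G a))
         (be : forall a, arr (fob G a) (fob F a)),
  [/\ (forall a, ishom (al a) /\ ishom (be a)),
      (forall a, heq (ccomp (be a) (al a)) (cid (fob F a))),
      (forall a, heq (ccomp (al a) (be a)) (cid (fob G a)))
    & (forall a b (f : arr a b), ishom f ->
          heq (ccomp (al b) (farr F f)) (ccomp (farr G f) (al a)))].

Definition cat_equivalent (C D : precat) : Prop :=
  exists (F : functor C D) (G : functor D C),
  [/\ is_functor F, is_functor G,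
      nat_iso (id_functor C) (comp_functor G F)
    & nat_iso (comp_functor F G) (id_functor D)].

Record comma_ob (S : finType) := CommaOb {
  cX : graph;
  cX_agg : aggregate cX;
  cphi : gmor cX (star S);
  cphi_ctd : agg_ctd cphi }.

Definition comma_hom (S : finType) (a b : comma_ob S) (psi : gmor (cX a) (cX b)) : Prop :=
  agg_forest psi /\ mor_eq (gcomp (cphi b) psi) (cphi a).

Definition comma_cat (S : finType) : precat :=
  @PreCat (comma_ob S) (fun a b => gmor (cX a) (cX b))
    (@comma_hom S) (fun a b => @mor_eq (cX a) (cX b))
    (fun a => gid (cX a)) (fun a b c g f => gcomp g f).

Record IS_ob (S : finType) := ISOb {
  iG : graph;
  iG_conn : connected_graph iG;
  ilab : S -> flag iG;
  ilab_inj : injective ilab;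
  ilab_outer : forall f, outer f <-> exists s, ilab s = f }.

Definition IS_hom (S : finType) (a b : IS_ob S) (phi : gmor (iG a) (iG b)) : Prop :=
  forest_contr phi /\ forall s, mF phi (ilab b s) = ilab a s.

Definition IS_cat (S : finType) : precat :=
  @PreCat (IS_ob S) (fun a b => gmor (iG a) (iG b))
    (@IS_hom S) (fun a b => @mor_eq (iG a) (iG b))
    (fun a => gid (iG a)) (fun a b c g f => gcomp g f).

(* Main.v *)
Require Import Defs.
From mathcomp Require Import all_boot.
Set Implicit Arguments. Unset Strict Implicit. Unset Printing Implicit Defensive.
Local Notation inv := Defs.inv.

Definition inimg (G H : graph) (phi : gmor G H) (f : flag G) : bool :=
  [exists g, mF phi g == f].

Lemma inimgP (G H : graph) (phi : gmor G H) f : reflect (in_img phi f) (inimg phi f).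
Proof. by apply: (iffP existsP) => [[g /eqP <-]|[g <-]]; exists g. Qed.
Lemma in_inimg (G H : graph) (phi : gmor G H) f : in_img phi f -> inimg phi f.
Proof. by move/inimgP. Qed.

Lemma pick_some (I : finType) (T : eqType) (h : I -> T) g f :
  injective h -> h g = f -> [pick x | h x == f] = Some g.
Proof.
move=> ih hg; case: pickP => [x /eqP E|N]; first by congr Some; apply: ih; rewrite E hg.
by have := N g; rewrite hg eqxx.
Qed.

Lemma pick_none (I : finType) (T : eqType) (h : I -> T) f :
  ~ (exists g, h g = f) -> [pick x | h x == f] = None.
Proof. by move=> N; case: pickP => // x /eqP E; case: N; exists x. Qed.

Section G.
Variables (G H K : graph) (phi : gmor G H) (psi : gmor H K).

Lemma gcompI_in g : injective (mF phi) ->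
  mI (gcomp psi phi) (mF phi g) = mF phi (mI psi g).
Proof. by move=> iF /=; rewrite (pick_some iF erefl). Qed.

Lemma gcompI_out f : ~ in_img phi f -> mI (gcomp psi phi) f = mI phi f.
Proof. by move=> N /=; rewrite pick_none. Qed.

Lemma img_gcomp f : in_img (gcomp psi phi) f -> in_img phi f.
Proof. by case=> k <-; exists (mF psi k). Qed.

Lemma out_cases f : injective (mF phi) -> ~ in_img (gcomp psi phi) f ->
  (~ in_img phi f /\ mI (gcomp psi phi) f = mI phi f) \/
  exists g, [/\ f = mF phi g, ~ in_img psi g & mI (gcomp psi phi) f = mF phi (mI psi g)].
Proof.
move=> iF nf; have [/inimgP [g Eg]|/inimgP ni] := boolP (inimg phi f).
  right; exists g; split => //; last by rewrite -Eg gcompI_in.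
  by case=> k Ek; apply: nf; exists k; rewrite /= Ek.
by left; split => //; rewrite gcompI_out.
Qed.
End G.

Lemma outer_img (G H : graph) (phi : gmor G H) g :
  is_gmor phi -> outer g -> outer (mF phi g).
Proof.
case=> _ iF _ _ [_ _ p7] og; rewrite /outer.
case: (eqVneq (inv (mF phi g)) (mF phi g)) => // /eqP ne.
by rewrite (p7 g ne) og.
Qed.

Lemma outer_img_inv (G H : graph) (phi : gmor G H) g :
  is_gmor phi -> outer (mF phi g) -> outer (mF phi (inv g)).
Proof.
case=> _ iF _ _ [_ _ p7] og; rewrite /outer.
case: (eqVneq (inv (mF phi (inv g))) (mF phi (inv g))) => // /eqP ne.
have := p7 _ ne; rewrite inv_invol => E.
have : mF phi (inv g) = mF phi g by rewrite -og -E inv_invol.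
move/iF => E2; move: ne; by rewrite E2 og.
Qed.

Lemma gcomp_gmor (G H K : graph) (phi : gmor G H) (psi : gmor H K) :
  is_gmor phi -> is_gmor psi -> is_gmor (gcomp psi phi).
Proof.
move=> Hphi Hpsi.
have Hphi' := Hphi; have Hpsi' := Hpsi.
case: Hphi => sV iF p3 p4 [p5 p6 p7]; case: Hpsi => sV' iF' p3' p4' [p5' p6' p7'].
split.
- move=> k; case: (sV' k) => y <-; case: (sV y) => x <-; by exists x.
- exact: inj_comp.
- move=> f nf; case: (out_cases iF nf) => [[ni ->]|[g [-> ng ->]]].
    have [ni2 [ii ne]] := p3 f ni; split => //.
    + by move/img_gcomp.
    + by rewrite gcompI_out.
  have [ng2 [ii ne]] := p3' g ng; split; [|split].
  + by case=> k /= /iF Ek; apply: ng2; exists k.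
  + by rewrite gcompI_in // ii.
  + by move/iF.
- by move=> k /=; rewrite p4 p4'.
split.
- move=> f nf; case: (out_cases iF nf) => [[ni ->]|[g [-> ng ->]]].
    by rewrite /= p5.
  by rewrite /= !p4 p5'.
- move=> f nf; case: (out_cases iF nf) => [[ni ->]|[g [-> ng ->]]].
    exact: p6.
  have [[ng1 ->]|[og om]] := p6' g ng.
    case: (eqVneq (inv (mF phi g)) (mF phi g)) => [ne|/eqP ne].
      right; split => //; exact: outer_img_inv.
    by left; split => //; rewrite (p7 g ne).
  by right; split; apply: outer_img.
- move=> k /= ne.
  have h1 := p7 (mF psi k) ne.
  have ne2 : inv (mF psi k) <> mF psi k by move=> E; apply: ne; rewrite h1 E.
  by rewrite h1 (p7' k ne2).
Qed.

Section MorEq.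
Variables (G H : graph).
Implicit Types phi psi chi : gmor G H.

Lemma mor_eq_img phi psi f : mor_eq phi psi -> in_img phi f <-> in_img psi f.
Proof. by case=> _ eF _; split; case=> g <-; exists g; rewrite eF. Qed.

Lemma mor_eq_sym phi psi : mor_eq phi psi -> mor_eq psi phi.
Proof.
move=> E; have [eV eF eI] := E; split => // f nf; symmetry; apply: eI.
by move/(mor_eq_img _ E).
Qed.

Lemma mor_eq_trans phi psi chi : mor_eq phi psi -> mor_eq psi chi -> mor_eq phi chi.
Proof.
move=> E1 E2; have [eV eF eI] := E1; have [eV' eF' eI'] := E2; split.
- by move=> x; rewrite eV eV'.
- by move=> x; rewrite eF eF'.
- move=> f nf; rewrite eI // eI' //; by move/(mor_eq_img _ E1).
Qed.

Lemma mor_eq_refl phi : mor_eq phi phi.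
Proof. by split. Qed.

Lemma mor_eq_gmor phi psi : mor_eq phi psi -> is_gmor phi -> is_gmor psi.
Proof.
move=> E [sV iF p3 p4 [p5 p6 p7]]; have [eV eF eI] := E.
have EI f : ~ in_img psi f -> mI psi f = mI phi f.
  by move=> nf; rewrite eI // => /(mor_eq_img _ E).
have Ni f : ~ in_img psi f -> ~ in_img phi f by move=> nf /(mor_eq_img _ E).
split.
- by move=> v; case: (sV v) => x <-; exists x; rewrite eV.
- exact: eq_inj iF eF.
- move=> f nf; have [n2 [ii ne]] := p3 f (Ni f nf); rewrite EI //.
  have n3 : ~ in_img psi (mI phi f) by move/(mor_eq_img _ E).
  by split => //; rewrite EI.
- by move=> k; rewrite -eV -eF.
split.
- move=> f nf; rewrite EI // -!eV; exact: p5 (Ni f nf).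
- move=> f nf; rewrite EI //; exact: p6 (Ni f nf).
- by move=> k; rewrite -!eF; apply: p7.
Qed.
End MorEq.

Lemma gen_gmor Ob (P : forall G H : graph, gmor G H -> Prop) :
  (forall G H (phi : gmor G H), P G H phi -> is_gmor phi) ->
  forall G H (phi : gmor G H), generated Ob P phi -> is_gmor phi.
Proof.
move=> HP G H phi; elim => {G H phi}.
- by move=> G H phi _ _ [].
- by move=> G H phi /HP.
- by move=> G H K phi psi _ h1 _ h2; apply: gcomp_gmor.
- by move=> G H phi psi E _ h; apply: mor_eq_gmor E h.
Qed.

Lemma gcomp_congr_r (G H K : graph) (phi phi' : gmor G H) (psi : gmor H K) :
  mor_eq phi phi' -> mor_eq (gcomp psi phi) (gcomp psi phi').
Proof.
move=> E; have [eV eF eI] := E; split.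
- by move=> x /=; rewrite eV.
- by move=> x /=; rewrite eF.
move=> f nf /=.
have -> : [pick g | mF phi g == f] = [pick g | mF phi' g == f].
  by apply: eq_pick => g; rewrite eF.
case: pickP => [g _|N]; first by rewrite eF.
apply: eI => -[g Eg]; by have := N g; rewrite -eF Eg eqxx.
Qed.

Lemma gcomp_assoc (G H K L : graph) (p1 : gmor G H) (p2 : gmor H K) (p3 : gmor K L) :
  injective (mF p1) -> injective (mF p2) ->
  mor_eq (gcomp p3 (gcomp p2 p1)) (gcomp (gcomp p3 p2) p1).
Proof.
move=> i1 i2; split => // f nf.
have i12 : injective (mF (gcomp p2 p1)) by apply: inj_comp.
have [/inimgP [h Eh]|/inimgP nh] := boolP (inimg p1 f).
  subst f.
  rewrite [RHS](gcompI_in _ _ i1).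
  have [/inimgP [g Eg]|/inimgP ng] := boolP (inimg p2 h).
    subst h.
    rewrite (gcompI_in _ _ i2).
    exact: (gcompI_in p3 g i12).
  rewrite [in RHS](gcompI_out p3 ng).
  rewrite [LHS](gcompI_out p3 (phi := gcomp p2 p1)); last first.
    by case=> g /= Eg; apply: ng; exists g; apply: i1.
  by rewrite gcompI_in.
rewrite gcompI_out; last by move/img_gcomp.
by rewrite gcompI_out // gcompI_out.
Qed.

Lemma connect_map (T T' : finType) (e : rel T) (e' : rel T') (h : T -> T') :
  (forall x y, e x y -> h x = h y \/ e' (h x) (h y)) ->
  forall x y, connect e x y -> connect e' (h x) (h y).
Proof.
move=> He x y /connectP [p pth ->]; elim: p x pth => [|z p IH] x /=.
  by rewrite connect0.
case/andP=> exz pz; apply: connect_trans (IH z pz).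
by case: (He _ _ exz) => [->|?]; [exact: connect0 | exact: connect1].
Qed.

Lemma ninimg (G H : graph) (phi : gmor G H) f : ~ in_img phi f -> ~~ inimg phi f.
Proof. by move=> N; apply/negP => /inimgP. Qed.

Definition Rphi (X Y : graph) (phi : gmor X Y) : rel (vert X) :=
  fun v w => [exists f, [&& ~~ inimg phi f, bd f == v & bd (mI phi f) == w]].

Definition contr_like (G H : graph) (phi : gmor G H) :=
  exists s t, contraction_along phi s t.

Lemma gen_conn Ob (P : forall G H : graph, gmor G H -> Prop) :
  (forall G H (phi : gmor G H), P G H phi -> contr_like phi) ->
  forall G H (phi : gmor G H), generated Ob P phi ->
  forall v w, mV phi v = mV phi w -> connect (Rphi phi) v w.
Proof.
move=> HP.
have HPg G H (phi : gmor G H) : P G H phi -> is_gmor phi.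
  by move/HP=> [s [t []]].
move=> G H phi; elim => {G H phi}.
- move=> G H phi _ _ [_ [g gK _]] _ v w E.
  by rewrite -(gK v) E gK connect0.
- move=> G H phi /HP [s [t [gm st eV eimg ms]]] v w /eV.
  have ns : ~ in_img phi s by move/eimg => [].
  have nt : ~ in_img phi t by move/eimg => [].
  have mt : mI phi t = s by case: gm => _ _ p3 _ _; case: (p3 s ns) => _ []; rewrite ms.
  case=> [->|[-> ->]|[-> ->]]; first exact: connect0.
    apply: connect1; apply/existsP; exists s; rewrite ms !eqxx andbT /=.
    rewrite andbT; exact: ninimg.
  apply: connect1; apply/existsP; exists t; rewrite mt !eqxx andbT /= andbT.
  exact: ninimg.
- move=> G H K phi psi gphi IHphi gpsi IHpsi v w E.
  have [_ iF _ p4 _] := gen_gmor HPg gphi.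
  have sub x y : Rphi phi x y -> Rphi (gcomp psi phi) x y.
    case/existsP=> f /and3P [/inimgP nf b1 b2]; apply/existsP; exists f.
    apply/and3P; split => //; last by rewrite gcompI_out.
    apply: ninimg; by move/img_gcomp.
  have lift y y' : Rphi psi y y' -> exists x x', [/\ mV phi x = y, mV phi x' = y' &
       Rphi (gcomp psi phi) x x'].
    case/existsP=> g /and3P [/inimgP ng /eqP b1 /eqP b2].
    exists (bd (mF phi g)), (bd (mF phi (mI psi g))); split; [by rewrite p4 | by rewrite p4|].
    apply/existsP; exists (mF phi g); apply/and3P; split => //; last by rewrite gcompI_in.
    apply: ninimg => -[k /= /iF Ek]; apply: ng; by exists k.
  have fib x y : mV phi x = mV phi y -> connect (Rphi (gcomp psi phi)) x y.
    move/IHphi; apply: connect_sub => a b /sub; exact: connect1.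
  have := IHpsi _ _ E; move/connectP => [p pth Ep].
  suff : forall y0, path (Rphi psi) y0 p ->
      (forall w, mV phi w = y0 -> connect (Rphi (gcomp psi phi)) v w) ->
      forall w, mV phi w = last y0 p -> connect (Rphi (gcomp psi phi)) v w.
    by move=> /(_ _ pth) H0; apply: H0 => [w' /esym /fib //|]; rewrite -Ep.
  elim: p {pth Ep} => [|z p IH] y0 /=; first by [].
  case/andP=> ry pz Hy0; apply: IH => // w' Ew'.
  have [x [x' [ex ex' rx]]] := lift _ _ ry.
  apply: connect_trans (Hy0 _ ex) _; apply: connect_trans (connect1 rx) _.
  by apply: fib; rewrite ex' Ew'.
- move=> G H phi psi E _ IH v w.
  have [eV eF eI] := E.
  rewrite -!eV => /IH; apply: connect_sub => a b.
  case/existsP=> f /and3P [/inimgP nf b1 b2]; apply: connect1; apply/existsP; exists f.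
  apply/and3P; split => //; last by rewrite -eI.
  apply: ninimg; by move/(mor_eq_img _ E).
Qed.

Section Main.
Variable S : finType.

Lemma ctd_gmor (X Y : graph) (phi : gmor X Y) : agg_ctd phi -> is_gmor phi.
Proof. by apply: gen_gmor => G H p [[_ _ [s [t [_ []]]]]|[_ _ [s [t [_ []]]]]]. Qed.

Lemma forest_gmor (X Y : graph) (phi : gmor X Y) : agg_forest phi -> is_gmor phi.
Proof. by apply: gen_gmor => G H p [_ _ [s [t [_ []]]]]. Qed.

Lemma fc_gmor (X Y : graph) (phi : gmor X Y) : forest_contr phi -> is_gmor phi.
Proof. by apply: gen_gmor => G H p [s [t [_ _ []]]]. Qed.

Lemma ctd_conn (X Y : graph) (phi : gmor X Y) : agg_ctd phi ->
  forall v w, mV phi v = mV phi w -> connect (Rphi phi) v w.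
Proof.
apply: gen_conn => G H p [[_ _ [s [t [_ C]]]]|[_ _ [s [t [_ C]]]]]; by exists s, t.
Qed.


Definition ginv (X Y : graph) (phi : gmor X Y) (f : flag X) : flag X :=
  if inimg phi f then f else mI phi f.

Lemma ginv_invol (X Y : graph) (phi : gmor X Y) : is_gmor phi -> involutive (ginv phi).
Proof.
case=> _ _ p3 _ _ f; rewrite /ginv.
have [/inimgP fi|/inimgP nf] := boolP (inimg phi f); first by rewrite (in_inimg fi).
have [n2 [ii _]] := p3 f nf.
have -> : inimg phi (mI phi f) = false by apply/inimgP.
by [].
Qed.

Lemma ginv_out (X Y : graph) (phi : gmor X Y) f : ~ in_img phi f -> ginv phi f = mI phi f.
Proof. by move=> N; rewrite /ginv; have -> : inimg phi f = false by apply/inimgP. Qed.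

Lemma ginv_in (X Y : graph) (phi : gmor X Y) f : in_img phi f -> ginv phi f = f.
Proof. by move=> N; rewrite /ginv (in_inimg N). Qed.

Definition gam (X Y : graph) (phi : gmor X Y) (H : is_gmor phi) : graph :=
  @Graph (flag X) (vert X) (@bd X) (ginv phi) (ginv_invol H).

Definition togam (X Y Z : graph) (phiX : gmor X Z) (phi : gmor Y Z)
  (HX : is_gmor phiX) (H : is_gmor phi) (psi : gmor X Y) : gmor (gam HX) (gam H) :=
  @GMor (gam HX) (gam H) (mV psi) (mF psi) (mI psi).

Lemma togam_gmor (X Y Z : graph) (phiX : gmor X Z) (phi : gmor Y Z)
  (HX : is_gmor phiX) (H : is_gmor phi) (psi : gmor X Y) :
  is_gmor psi -> mor_eq (gcomp phi psi) phiX -> is_gmor (togam HX H psi).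
Proof.
move=> Hpsi E; have [eV eF eI] := E.
have Hpsi' := Hpsi; case: Hpsi => sV iF p3 p4 [p5 p6 p7].
have nX f : ~ in_img psi f -> ~ in_img phiX f.
  by move=> nf /(mor_eq_img _ E) /img_gcomp.
split; [exact: sV|exact: iF|exact: p3|exact: p4|split; [exact: p5| |]].
- move=> f nf /=; left; rewrite ginv_out; last exact: nX.
  rewrite -eI; last by move/img_gcomp.
  rewrite gcompI_out //; split => //; by case: (p3 f nf) => _ [].
move=> k /=.
have [/inimgP ki|/inimgP nk] := boolP (inimg phi k).
  by rewrite ginv_in //; case: ki => j <-; apply/(mor_eq_img _ E); exists j.
have nk2 : ~ in_img phiX (mF psi k).
  move/(mor_eq_img _ (mor_eq_sym E)) => [j /= /iF Ej]; apply: nk; by exists j.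
move=> _; rewrite ginv_out // -eI; last by move/(mor_eq_img _ E).
by rewrite gcompI_in // ginv_out.
Qed.

Lemma transF (X Y : graph) (psi : gmor X Y) : agg_forest psi ->
  forall (Z : graph) (phi : gmor Y Z) (H : is_gmor phi) (phiX : gmor X Z) (HX : is_gmor phiX),
  mor_eq (gcomp phi psi) phiX -> forest_contr (togam HX H psi).
Proof.
elim => {X Y psi}.
- move=> X Y psi _ _ [gm bV bF] Z phi H phiX HX E.
  apply: gen_iso => //; split => //; exact: togam_gmor.
- move=> X Y psi [_ _ [s [t [bst [gm st eV eimg ms]]]]] Z phi H phiX HX E.
  apply: gen_base; exists s, t; split => //.
  + have [_ _ eI] := E.
    rewrite /= ginv_out //.
      rewrite -eI; last by move/img_gcomp/eimg => [].
      by rewrite gcompI_out // => /eimg [].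
    by move/(mor_eq_img _ (mor_eq_sym E))/img_gcomp/eimg => [].
  + split => //; exact: togam_gmor.
- move=> X Y W p1 p2 g1 IH1 g2 IH2 Z phi H phiX HX E.
  have H2 := gcomp_gmor (forest_gmor g2) H.
  have A1 := IH1 Z (gcomp phi p2) H2 phiX HX.
  have A2 := IH2 Z phi H (gcomp phi p2) H2 (mor_eq_refl _).
  have i1 : injective (mF p1) by case: (forest_gmor g1).
  have i2 : injective (mF p2) by case: (forest_gmor g2).
  have := gen_comp (A1 (mor_eq_trans (mor_eq_sym (gcomp_assoc phi i1 i2)) E)) A2.
  apply: gen_eq; split => //.
- move=> X Y p p' E g IH Z phi H phiX HX E2.
  have := IH Z phi H phiX HX (mor_eq_trans (gcomp_congr_r phi E) E2).
  apply: gen_eq; have [eV eF eI] := E; split => //.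
Qed.

Definition cgm (a : comma_ob S) : is_gmor (cphi a) := ctd_gmor (cphi_ctd a).
Definition Fgr (a : comma_ob S) : graph := gam (cgm a).

Lemma Fconn (a : comma_ob S) : connected_graph (Fgr a).
Proof.
have [sV _ p3 _ _] := cgm a.
split; first by case: (sV tt) => v _; exists v.
move=> v w; have := @ctd_conn _ _ _ (cphi_ctd a) v w.
case: (mV (cphi a) v); case: (mV (cphi a) w) => /(_ erefl).
apply: connect_sub => x y /existsP [f /and3P [/inimgP nf b1 b2]].
apply: connect1; apply/existsP; exists f; rewrite /= ginv_out //.
apply/and3P; split => //; apply/eqP; by case: (p3 f nf) => _ [].
Qed.

Lemma Finj (a : comma_ob S) : injective (mF (cphi a)).
Proof. by case: (cgm a). Qed.

Lemma Fouter (a : comma_ob S) (f : flag (Fgr a)) :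
  outer f <-> exists s, mF (cphi a) s = f.
Proof.
have [_ _ p3 _ _] := cgm a; rewrite /outer /=; split.
  have [/inimgP //|/inimgP nf] := boolP (inimg (cphi a) f).
  by rewrite ginv_out // => E; case: (p3 f nf) => _ [].
by move=> fi; rewrite ginv_in.
Qed.

Definition Fob (a : comma_ob S) : IS_ob S := @ISOb S (Fgr a) (Fconn a) (mF (cphi a)) (@Finj a) (@Fouter a).

Definition FF : functor (comma_cat S) (IS_cat S) :=
  @Functor (comma_cat S) (IS_cat S) Fob
    (fun a b (psi : gmor (cX a) (cX b)) => @GMor (iG (Fob a)) (iG (Fob b)) (mV psi) (mF psi) (mI psi)).

Lemma FF_functor : is_functor FF.
Proof.
split.
- move=> a b psi [fpsi E] /=; split.
    exact: (transF fpsi (cgm b) (cgm a) E).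
  by move=> s; have [_ eF _] := E; exact: eF.
- by move=> a b f g _ _ [eV eF eI]; split.
- by move=> a; split.
- by move=> a b c f g _ _; split.
Qed.

Definition agg (G : graph) : graph := @Graph (flag G) (vert G) (@bd G) id (fun _ => erefl).

Definition toagg (G H : graph) (psi : gmor G H) : gmor (agg G) (agg H) :=
  @GMor (agg G) (agg H) (mV psi) (mF psi) (mI psi).

Lemma toagg_gmor (G H : graph) (psi : gmor G H) : is_gmor psi -> is_gmor (toagg psi).
Proof.
case=> sV iF p3 p4 [p5 p6 p7].
split; [exact: sV|exact: iF|exact: p3|exact: p4|split; [exact: p5| |]].
- by move=> f _; right.
- by move=> k /= Hk; case: (Hk erefl).
Qed.

Lemma transG (G H : graph) (psi : gmor G H) : forest_contr psi -> agg_forest (toagg psi).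
Proof.
elim => {G H psi}.
- move=> G H psi _ _ [gm bV bF]; apply: gen_iso => //; split => //; exact: toagg_gmor.
- move=> G H psi [s [t [ist bst [gm st eV eimg ms]]]]; apply: gen_base.
  split => //; exists s, t; split => //; split => //; exact: toagg_gmor.
- move=> G H K p1 p2 _ IH1 _ IH2; exact: gen_comp IH1 IH2.
- move=> G H p p' [eV eF eI] _ IH; apply: gen_eq IH; by split.
Qed.

Definition phiG (a : IS_ob S) : gmor (agg (iG a)) (star S) :=
  @GMor (agg (iG a)) (star S) (fun _ => tt) (ilab a) (@inv (iG a)).


Section Contr.
Variables (G : graph) (s0 : flag G).

Definition Pf (f : flag G) : bool := (f != s0) && (f != inv s0).
Definition Pv (v : vert G) : bool := (v != bd (inv s0)) || (bd s0 == bd (inv s0)).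
Definition Fc : finType := {f : flag G | Pf f}.
Definition Vc : finType := {v : vert G | Pv v}.

Lemma PvS : Pv (bd s0).
Proof. by rewrite /Pv orbC orbN. Qed.

Definition rr (v : vert G) := if v == bd (inv s0) then bd s0 else v.
Definition rV (v : vert G) : Vc := insubd (exist _ (bd s0) PvS : Vc) (rr v).

Lemma val_rV v : val (rV v) = rr v.
Proof.
rewrite val_insubd; have -> // : Pv (rr v).
rewrite /rr; case: (eqVneq v (bd (inv s0))) => [_|ne]; first exact: PvS.
by rewrite /Pv ne.
Qed.

Lemma Pf_inv f : Pf f -> Pf (inv f).
Proof.
rewrite /Pf; case/andP=> h1 h2; apply/andP; split; apply/eqP => E.
  by move/eqP: h2; apply; rewrite -E inv_invol.
by move/eqP: h1; apply; rewrite -[f]inv_invol E inv_invol.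
Qed.

Definition invc (f : Fc) : Fc := insubd f (inv (val f)).

Lemma val_invc f : val (invc f) = inv (val f).
Proof. by rewrite val_insubd Pf_inv // (valP f). Qed.

Lemma invc_invol : involutive invc.
Proof. by move=> f; apply: val_inj; rewrite !val_invc inv_invol. Qed.

Definition bdc (f : Fc) : Vc := rV (bd (val f)).
Definition Gc : graph := @Graph Fc Vc bdc invc invc_invol.
Definition cc : gmor (agg G) (agg Gc) := @GMor (agg G) (agg Gc) rV val (@inv G).

Lemma rV_eq v w : rV v = rV w <->
  [\/ v = w, (v = bd s0 /\ w = bd (inv s0)) | (v = bd (inv s0) /\ w = bd s0)].
Proof.
split.
  move/(congr1 val); rewrite !val_rV /rr.
  case: (eqVneq v (bd (inv s0))) => [->|nv]; case: (eqVneq w (bd (inv s0))) => [->|nw] //=.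
  - by move=> _; apply: Or31.
  - by move=> E; apply: Or33.
  - by move=> E; apply: Or32.
  - by move=> E; apply: Or31.
have rs : rr (bd s0) = bd s0 by rewrite /rr; case: ifP.
have rt : rr (bd (inv s0)) = bd s0 by rewrite /rr eqxx.
case=> [->|[-> ->]|[-> ->]] //; apply: val_inj; by rewrite !val_rV rs rt.
Qed.

Lemma rV_val (v : Vc) : rV (val v) = v.
Proof.
apply: val_inj; rewrite val_rV /rr; case: eqP => // E.
by have := valP v; rewrite /Pv E eqxx /= => /eqP.
Qed.

Lemma imgc f : in_img cc f <-> Pf f.
Proof.
split => [[f' <-]|pf]; first exact: (valP f').
by exists (exist _ f pf : Fc).
Qed.

Hypothesis ns0 : inv s0 != s0.

Lemma notPf f : ~~ Pf f -> f = s0 \/ f = inv s0.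
Proof. by rewrite /Pf negb_and !negbK => /orP [/eqP|/eqP]; [left|right]. Qed.

Lemma cc_contr : contraction_along cc s0 (inv s0).
Proof.
have nimg f : ~ in_img cc f <-> ~~ Pf f.
  by split => [N|/negP N /imgc //]; apply/negP => /imgc.
split.
- split.
  + by move=> v'; exists (val v'); exact: rV_val.
  + exact: val_inj.
  + move=> f /nimg nf; split.
      apply/nimg; apply/negP => /Pf_inv; rewrite inv_invol; exact/negP.
    split; first exact: (@inv_invol G f).
    case: (notPf nf) => ->; first exact/eqP.
    by rewrite /= (@inv_invol G) => /esym; apply/eqP.
  + by [].
  split.
  + move=> f /nimg /notPf [->|->] /=; apply/rV_eq; [apply: Or32 | apply: Or33];
      by rewrite ?inv_invol.
  + by move=> f _; right.
  + by move=> k /= Hk; case: (Hk erefl).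
- by move=> E; move: ns0; rewrite -E eqxx.
- exact: rV_eq.
- move=> f; split.
    by move/imgc; case/andP => /eqP ? /eqP ?.
  by case => /eqP ? /eqP ?; apply/imgc; apply/andP.
- by [].
Qed.

Lemma Gc_conn : connected_graph G -> connected_graph Gc.
Proof.
case=> [[v0 _] conn]; split; first by exists (rV v0).
move=> v' w'; rewrite -(rV_val v') -(rV_val w').
apply: (connect_map _ (conn (val v') (val w'))) => v w.
case/existsP => f /and3P [nf /eqP bv /eqP bw].
case: (boolP (Pf f)) => pf.
  right; apply/existsP; exists (exist _ f pf); apply/and3P; split.
  - apply/eqP => /(congr1 val); rewrite val_invc /= => E; by rewrite E eqxx in nf.
  - by apply/eqP; rewrite /= /bdc /= bv.
  - by apply/eqP; rewrite /= /bdc val_invc /= bw.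
left; apply/rV_eq; case: (notPf pf) => Ef; subst f.
  by apply: Or32.
by apply: Or33; rewrite inv_invol in bw.
Qed.

Lemma card_Fc : #|Fc| < #|flag G|.
Proof.
rewrite card_sig; apply: proper_card; apply/properP; split.
  by apply/subsetP.
by exists s0 => //; rewrite inE /Pf eqxx.
Qed.

End Contr.

Lemma labPf (G : graph) (s0 x : flag G) : inv s0 != s0 -> inv x = x -> Pf s0 x.
Proof.
move=> ns ox; apply/andP; split; apply/eqP => E.
  by move: ns; rewrite -E ox eqxx.
by move: ns; rewrite -{2}(inv_invol s0) -E ox E eqxx.
Qed.

Lemma ctd_base (G : graph) (lab : S -> flag G) : injective lab ->
  (forall f, outer f <-> exists s, lab s = f) -> connected_graph G ->
  (forall f : flag G, inv f = f) ->
  agg_ctd (@GMor (agg G) (star S) (fun _ => tt) lab (@inv G)).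
Proof.
move=> il Hout [[v0 _] conn] ao.
have alleq (v w : vert G) : v = w.
  have /connectP [[|x p] pth ->] := conn v w => //.
  move: pth => /= /andP [/existsP [f /and3P [nf _ _]] _].
  by move: nf; rewrite ao eqxx.
have surj f : exists s, lab s = f by apply/Hout; exact: ao.
apply: gen_iso => //.
split.
- split.
  + by move=> []; exists v0.
  + exact: il.
  + by move=> f nf; case: nf; apply: surj.
  + by [].
  split.
  + by move=> f nf; case: nf; apply: surj.
  + by move=> f _; right.
  + by move=> k /= Hk; case: (Hk erefl).
- by exists (fun _ => v0) => [v|[]] //; apply: alleq.
- apply: (@inj_card_bij S (flag G) lab il); rewrite -(card_codom il).
  apply/subset_leq_card/subsetP => f _; have [s <-] := surj f; exact: codom_f.
Qed.

Lemma ctd_all n : forall (G : graph) (lab : S -> flag G), injective lab ->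
  (forall f, outer f <-> exists s, lab s = f) -> connected_graph G ->
  #|flag G| <= n ->
  agg_ctd (@GMor (agg G) (star S) (fun _ => tt) lab (@inv G)).
Proof.
elim: n => [|n IH] G lab il Hout Hc cn;
  (case: (boolP [exists f : flag G, inv f != f]) => [/existsP [s0 ns0]|none];
   last by apply: ctd_base => // f; apply/eqP; move/existsP: none => N;
        apply/negP => /negP nf; apply: N; exists f).
  suff : 0 < #|flag G| by rewrite lt0n; move: cn; rewrite leqn0 => ->.
  by apply/card_gt0P; exists s0.
have labP s : Pf s0 (lab s) by exact: (labPf ns0 (proj2 (Hout _) (ex_intro _ s erefl))).
pose lab' : S -> flag (Gc s0) := fun s => exist _ (lab s) (labP s).
have il' : injective lab' by move=> x y /(congr1 val) /il.
have Hout' f : outer f <-> exists s, lab' s = f.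
  rewrite /outer; split.
    move/(congr1 val); rewrite /= val_invc => /Hout [s Es].
    by exists s; apply: val_inj.
  case=> s <-; apply: val_inj; rewrite /= val_invc; apply/Hout; by exists s.
have cn' : #|flag (Gc s0)| <= n by rewrite -ltnS; exact: leq_trans (card_Fc s0) cn.
have IH' := IH (Gc s0) lab' il' Hout' (Gc_conn s0 Hc) cn'.
have Bc : virtual_edge_contraction (cc s0) \/ loop_contraction (cc s0).
  case: (eqVneq (bd s0) (bd (inv s0))) => [E|/eqP E]; [right|left];
    (split => //; exists s0, (inv s0); split => //; exact: cc_contr).
have := gen_comp (@gen_base aggregate (fun G H phi => virtual_edge_contraction phi \/ loop_contraction phi) _ _ _ Bc) IH'.
apply: gen_eq; split => //.
move=> f nf /=; case: pickP => [g /eqP <-|_] /=; last by [].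
exact: val_invc.
Qed.
Lemma phiG_ctd (a : IS_ob S) : agg_ctd (phiG a).
Proof. exact: (@ctd_all _ (iG a) (ilab a) (@ilab_inj _ a) (@ilab_outer _ a) (@iG_conn _ a) (leqnn _)). Qed.

Definition Gob (a : IS_ob S) : comma_ob S :=
  @CommaOb S (agg (iG a)) (fun _ => erefl) (phiG a) (phiG_ctd a).

Definition GG : functor (IS_cat S) (comma_cat S) :=
  @Functor (IS_cat S) (comma_cat S) Gob
    (fun a b (psi : gmor (iG a) (iG b)) => toagg psi).

Lemma GG_functor : is_functor GG.
Proof.
split.
- move=> a b psi [fpsi lab] /=; split; first exact: transG.
  have [sV iF p3 p4 [p5 p6 p7]] := fc_gmor fpsi.
  split; [by []|by move=> s; exact: lab|].
  move=> f nf; case: (@out_cases _ _ _ (toagg psi) (phiG b) f iF nf) => [[ni ->]|[g [-> ng ->]]].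
    have [[_ ->]//|[ofo _]] := p6 f ni.
    case: nf; have [s Es] := (proj1 (ilab_outer f) ofo); exists s; by rewrite /= lab.
  have ng' : ~ @outer (iG b) g.
    move=> og; apply: ng; have [s Es] := (proj1 (ilab_outer g) og); by exists s.
  case: (eqVneq (inv (mF psi g)) (mF psi g)) => [og|/eqP ne]; last by rewrite /= (p7 g ne).
  have [s Es] := (proj1 (ilab_outer (mF psi g)) og).
  by case: ng'; rewrite /outer -(iF _ _ (etrans (lab s) Es)); apply/(ilab_outer); exists s.
- by move=> a b f g _ _ [eV eF eI]; split.
- by move=> a; split.
- by move=> a b c f g _ _; split.
Qed.

Lemma id_gmor (G H : graph) (psi : gmor G H) :
  (forall f, in_img psi f) -> bijective (mV psi) -> bijective (mF psi) ->
  (forall f', inv (mF psi f') <> mF psi f' -> inv (mF psi f') = mF psi (inv f')) ->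
  (forall f', mV psi (bd (mF psi f')) = bd f') ->
  is_iso psi.
Proof.
move=> eF bV bF p7 p4; split => //; split.
- by move=> v; case: bV => g _ K; exists (g v); rewrite K.
- exact: bij_inj.
- by move=> f nf; case: nf.
- exact: p4.
by split => // f nf; case: nf.
Qed.

Definition eta (a : comma_ob S) : gmor (cX a) (cX (Gob (Fob a))) :=
  @GMor (cX a) (cX (Gob (Fob a))) id id id.
Definition etai (a : comma_ob S) : gmor (cX (Gob (Fob a))) (cX a) :=
  @GMor (cX (Gob (Fob a))) (cX a) id id id.

Lemma bij_id (T : Type) : bijective (@id T).
Proof. by exists id. Qed.

Lemma eta_hom (a : comma_ob S) : comma_hom (eta a).
Proof.
split.
  apply: gen_iso; [exact: cX_agg | by [] | ].
  apply: id_gmor => //; try exact: bij_id; first by move=> f; exists f.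
  by move=> k /= Hk; case: Hk; apply: cX_agg.
split => //; first by move=> x; case: (mV (cphi a) x).
move=> f nf.
rewrite (@gcompI_in _ _ _ (eta a) (phiG (Fob a)) f (fun x y (E : x = y) => E)) /=.
by rewrite ginv_out.
Qed.

Lemma etai_hom (a : comma_ob S) : comma_hom (etai a).
Proof.
split.
  apply: gen_iso; [by [] | exact: cX_agg | ].
  apply: id_gmor => //; try exact: bij_id; first by move=> f; exists f.
  all: try by move=> k /= Hk; case: (Hk erefl).
split => //; first by move=> x; case: (mV (cphi a) x).
move=> f nf.
rewrite (@gcompI_in _ _ _ (etai a) (cphi a) f (fun x y (E : x = y) => E)) /=.
by rewrite ginv_out.
Qed.

Lemma ginvG (a : IS_ob S) (f : flag (iG a)) : ginv (phiG a) f = @inv (iG a) f.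
Proof.
rewrite /ginv; case E: (inimg (phiG a) f); last by [].
move/inimgP: E => [s Es].
rewrite -Es /=; symmetry; apply/(ilab_outer); by exists s.
Qed.

Definition eps (a : IS_ob S) : gmor (iG (Fob (Gob a))) (iG a) :=
  @GMor (iG (Fob (Gob a))) (iG a) id id id.
Definition epsi (a : IS_ob S) : gmor (iG a) (iG (Fob (Gob a))) :=
  @GMor (iG a) (iG (Fob (Gob a))) id id id.

Lemma eps_hom (a : IS_ob S) : IS_hom (eps a).
Proof.
split => //; apply: gen_iso => //.
apply: id_gmor => //; try exact: bij_id; first by move=> f; exists f.
by move=> k /= _; rewrite ginvG.
Qed.

Lemma epsi_hom (a : IS_ob S) : IS_hom (epsi a).
Proof.
split => //; apply: gen_iso => //.
apply: id_gmor => //; try exact: bij_id; first by move=> f; exists f.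
by move=> k /= _; rewrite ginvG.
Qed.

Lemma natC : nat_iso (id_functor (comma_cat S)) (comp_functor GG FF).
Proof.
exists eta, etai; split.
- by move=> a; split; [exact: eta_hom | exact: etai_hom].
- by move=> a; split => // f nf; case: nf; exists f.
- by move=> a; split => // f nf; case: nf; exists f.
move=> a b f _; split => // f0 nf.
rewrite gcompI_out //.
by rewrite (@gcompI_in _ _ _ (eta a) _ f0 (fun x y (E : x = y) => E)).
Qed.

Lemma natD : nat_iso (comp_functor FF GG) (id_functor (IS_cat S)).
Proof.
exists eps, epsi; split.
- by move=> a; split; [exact: eps_hom | exact: epsi_hom].
- by move=> a; split => // f nf; case: nf; exists f.
- by move=> a; split => // f nf; case: nf; exists f.
move=> a b f _; split => // f0 nf.
rewrite gcompI_out //.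
by rewrite (@gcompI_in _ _ _ (eps a) _ f0 (fun x y (E : x = y) => E)).
Qed.

Theorem proposition5p5' : cat_equivalent (comma_cat S) (IS_cat S).
Proof. exists FF, GG; split; [exact: FF_functor|exact: GG_functor|exact: natC|exact: natD]. Qed.

End Main.

Theorem proposition5p5 (S : finType) : cat_equivalent (comma_cat S) (IS_cat S).
Proof. exact: proposition5p5'. Qed.
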